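(* Let $\mathcal{H}=\bigotimes_{a=1}^N\mathcal{H}_a$ be a finite-dimensional multipartite Hilbert space, let $\mathcal{N}=\{\mathcal{N}_k\}_{k=1}^M$ be a non-trivial neighborhood structure, and let $\rho\in\mathcal{D}(\mathcal{H})$. Then every state $\sigma$ in the joining set $\mathcal{M}_{\mathcal{N}}(\rho)$ satisfies $\mathrm{supp}(\sigma)\subseteq\mathcal{H}_{\mathcal{N}}(\rho)$.
   Context: $\mathcal{H}=\bigotimes_{a=1}^N\mathcal{H}_a$ with $\dim\mathcal{H}_a=d_a<\infty$; $\mathcal{D}(\mathcal{H})$ is the set of density operators (positive semidefinite, trace one) on $\mathcal{H}$. A neighborhood is a subset $\mathcal{N}_k\subsetneq\{1,\dots,N\}$ and a neighborhood structure is a finite collection $\mathcal{N}=\{\mathcal{N}_k\}_{k=1}^M$ of neighborhoods; it is non-trivial if every index $j\in\{1,\dots,N\}$ belongs to some $\mathcal{N}_k$ and every $\mathcal{N}_k$ overlaps (has nonempty intersection) with at least one other $\mathcal{N}_{k'}$. For a state $\rho$, $\overline{\mathcal{N}}_k$ denotes the complement of $\mathcal{N}_k$ and $\rho_{\mathcal{N}_k}=\mathrm{tr}_{\overline{\mathcal{N}}_k}(\rho)$ is the reduced density matrix on $\mathcal{N}_k$. The joining set is $\mathcal{M}_{\mathcal{N}}(\rho)=\{\sigma\in\mathcal{D}(\mathcal{H}):\mathrm{tr}_{\overline{\mathcal{N}}_k}\rho=\mathrm{tr}_{\overline{\mathcal{N}}_k}\sigma\ \forall\,\mathcal{N}_k\in\mathcal{N}\}$.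 The DQLS subspace of $\rho$ relative to $\mathcal{N}$ is $\mathcal{H}_{\mathcal{N}}(\rho)=\bigcap_{\mathcal{N}_k\in\mathcal{N}}\mathrm{supp}(\rho_{\mathcal{N}_k}\otimes I_{\overline{\mathcal{N}}_k})$. *)

(* Defs.v *)
From HB Require Import structures.
From mathcomp Require Import all_boot all_order all_algebra.
Set Implicit Arguments. Unset Strict Implicit. Unset Printing Implicit Defensive.
Import Order.TTheory GRing.Theory Num.Theory.
Local Open Scope ring_scope.

(* Multipartite system: N parties, party a has local dimension d a.
   The computational basis of H = (x)_a H_a is indexed by Idx d. *)
Definition Idx (N : nat) (d : 'I_N -> nat) : finType :=
  {dffun forall a : 'I_N, 'I_(d a)}.

Definition SIdx (N : nat) (d : 'I_N -> nat) (S : {set 'I_N}) : finType :=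
  {dffun forall a : {a : 'I_N | a \in S}, 'I_(d (val a))}.

Section Ops.
Variables (C : numClosedFieldType) (N : nat) (d : 'I_N -> nat).

(* Operators on H as matrices in the product basis; vectors as coordinate functions. *)
Definition op := Idx d -> Idx d -> C.
Definition vec := Idx d -> C.

Definition restr (S : {set 'I_N}) (i : Idx d) : SIdx d S :=
  [ffun a : {a : 'I_N | a \in S} => i (val a)].

Definition psd (A : op) : Prop :=
  forall v : vec, 0 <= \sum_(i : Idx d) \sum_(j : Idx d) (v i)^* * A i j * v j.

Definition trace (A : op) : C := \sum_(i : Idx d) A i i.

Definition density (A : op) : Prop := psd A /\ trace A = 1.

Definition ptrace (S : {set 'I_N}) (A : op) : SIdx d S -> SIdx d S -> C :=
  fun x y => \sum_(i : Idx d) \sum_(j : Idx d |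
      [&& restr S i == x, restr S j == y & restr (~: S) i == restr (~: S) j])
      A i j.

Definition tensorI (S : {set 'I_N}) (B : SIdx d S -> SIdx d S -> C) : op :=
  fun i j => if restr (~: S) i == restr (~: S) j
             then B (restr S i) (restr S j) else 0.

(* support (= range, for the Hermitian operators considered here) *)
Definition in_supp (A : op) (v : vec) : Prop :=
  exists w : vec, forall i, v i = \sum_(j : Idx d) A i j * w j.

Definition neighborhood_structure (Ns : {set {set 'I_N}}) : Prop :=
  forall K, K \in Ns -> K \proper [set: 'I_N].

Definition nontrivial (Ns : {set {set 'I_N}}) : Prop :=
  (forall j : 'I_N, exists2 K, K \in Ns & j \in K) /\
  (forall K, K \in Ns -> exists2 K', K' \in Ns & (K' != K) && (K :&: K' != set0)).

Definition joining (Ns : {set {set 'I_N}}) (rho sigma : op) : Prop :=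
  density sigma /\
  forall K, K \in Ns -> forall x y, @ptrace K rho x y = @ptrace K sigma x y.

Definition in_DQLS (Ns : {set {set 'I_N}}) (rho : op) (v : vec) : Prop :=
  forall K, K \in Ns -> in_supp (@tensorI K (@ptrace K rho)) v.

End Ops.

(* Main.v *)
Require Import Defs.
From HB Require Import structures.
From mathcomp Require Import all_boot all_order all_algebra.
From mathcomp Require Import ring.
Set Implicit Arguments. Unset Strict Implicit. Unset Printing Implicit Defensive.
Import Order.TTheory GRing.Theory Num.Theory.
Local Open Scope ring_scope.

Lemma sum_enum (R : nmodType) (T : finType) (F : T -> R) :
  \sum_(i < #|T|) F (enum_val i) = \sum_(x : T) F x.
Proof. by rewrite -(big_enum_val (A := predT)); apply: eq_bigl. Qed.

Section Glue.
Variables (N : nat) (d : 'I_N -> nat).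

Lemma restrP (S : {set 'I_N}) (i j : Idx d) :
  reflect {in S, forall x, i x = j x} (restr S i == restr S j).
Proof.
apply: (iffP eqP) => [E x xS|E].
  by move/ffunP: E => /(_ (exist _ x xS)); rewrite !ffunE.
by apply/ffunP => -[x xS]; rewrite !ffunE /= E.
Qed.

Variable K : {set 'I_N}.

Definition glue (a c : Idx d) : Idx d :=
  [ffun x : 'I_N => if x \in K then a x else c x].

Lemma glueE a c x : glue a c x = if x \in K then a x else c x.
Proof. by rewrite ffunE. Qed.

Lemma glue_K a c : restr K (glue a c) == restr K a.
Proof. by apply/restrP => x xK; rewrite glueE xK. Qed.

Lemma glue_Kc a c : restr (~: K) (glue a c) == restr (~: K) c.
Proof. by apply/restrP => x; rewrite inE glueE => /negbTE ->. Qed.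

Lemma glue_char a c j :
  (j == glue a c) = (restr K j == restr K a) && (restr (~: K) j == restr (~: K) c).
Proof.
apply/idP/idP => [/eqP ->|/andP[/restrP h1 /restrP h2]]; first by rewrite glue_K glue_Kc.
apply/eqP.
apply/ffunP => x; rewrite glueE; case: ifP => xK; first exact: h1.
by apply: h2; rewrite inE xK.
Qed.

Lemma glue_glue_r a b c : glue a (glue b c) = glue a c.
Proof. by apply/ffunP => x; rewrite !glueE; case: (x \in K). Qed.

Lemma glue_glue_l a b c : glue (glue a b) c = glue a c.
Proof. by apply/ffunP => x; rewrite !glueE; case: (x \in K). Qed.

Lemma glue_idK a i : restr K a == restr K i -> glue a i = i.
Proof. by move=> /restrP h; apply/ffunP => x; rewrite glueE; case: ifP => // /h. Qed.

Lemma glue_idKc a i : restr (~: K) a == restr (~: K) i -> glue i a = i.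
Proof.
move=> /restrP h; apply/ffunP => x; rewrite glueE; case: ifP => // xK.
by apply: h; rewrite inE xK.
Qed.

Lemma glue_dep a c c' : restr (~: K) c == restr (~: K) c' -> glue a c = glue a c'.
Proof.
move=> /restrP h; apply/ffunP => x; rewrite !glueE; case: ifP => // xK.
by apply: h; rewrite inE xK.
Qed.

End Glue.
Section Forms.
Variables (C : numClosedFieldType) (N : nat) (d : 'I_N -> nat).

Definition q (A : op C d) (x y : vec C d) : C :=
  \sum_i \sum_j (x i)^* * A i j * y j.

Lemma qexp A x y t :
  q A (fun i => x i + t * y i) (fun i => x i + t * y i) =
  q A x x + t * q A x y + t^* * q A y x + t^* * t * q A y y.
Proof.
rewrite /q !mulr_sumr -!big_split /=; apply: eq_bigr => i _.
rewrite !mulr_sumr -!big_split /=; apply: eq_bigr => j _.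
rewrite rmorphD rmorphM /=. ring.
Qed.

Lemma herm_key (a b p r P R : C) :
  a + P + R + b = a + p + r + b ->
  a + - 'i * P + 'i * R + 'i * - 'i * b = a + 'i * p + - 'i * r + - 'i * 'i * b ->
  r = P.
Proof.
move=> e1 e2.
have e1' : P + R - p - r = 0.
  have -> : P + R - p - r = (a + P + R + b) - (a + p + r + b) by ring.
  by rewrite e1 subrr.
have e2' : 'i * (- P + R - p + r) = 0.
  have -> : 'i * (- P + R - p + r) = (a + - 'i * P + 'i * R + 'i * - 'i * b) - (a + 'i * p + - 'i * r + - 'i * 'i * b) by ring.
  by rewrite e2 subrr.
move/eqP: e2'; rewrite mulf_eq0 (negbTE (@neq0Ci C)) /= => /eqP e2'.
have : (P - r) * 2 = 0 by rewrite -[0]subr0 -{1}e1' -e2'; ring.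
move/eqP; rewrite mulf_eq0 pnatr_eq0 orbF subr_eq0 => /eqP ->. done.
Qed.

Lemma psd_herm A x y : psd A -> q A y x = (q A x y)^*.
Proof.
move=> hA.
have h1 : 0 <= q A (fun i => x i + 1 * y i) (fun i => x i + 1 * y i) by exact: hA.
have h2 : 0 <= q A (fun i => x i + 'i * y i) (fun i => x i + 'i * y i) by exact: hA.
have hx : (q A x x)^* = q A x x by apply: geC0_conj; exact: hA.
have hy : (q A y y)^* = q A y y by apply: geC0_conj; exact: hA.
move: h1 h2; rewrite !qexp => /geC0_conj h1 /geC0_conj h2.
move: h1 h2; rewrite !rmorphD !rmorphM /= conjCK hx hy rmorph1 !conjCi rmorphN /= conjCi opprK.
rewrite !mul1r; exact: herm_key.
Qed.

Lemma psd_cs A x y : psd A -> q A x x = 0 -> q A x y = 0.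
Proof.
move=> hA hx.
set p := q A x y; set c := q A y y.
have c0 : 0 <= c by exact: hA.
have c1 : 0 < c + 1 by rewrite ltr_wpDl.
have c1n : c + 1 != 0 by rewrite gt_eqF.
have cc : c^* = c by exact: geC0_conj.
set t := - (p^* / (c + 1)).
have h : 0 <= q A (fun i => x i + t * y i) (fun i => x i + t * y i) by exact: hA.
rewrite qexp hx (psd_herm x y hA) -/p -/c in h.
have tc : t^* = - (p / (c + 1)) by rewrite /t rmorphN fmorph_div /= conjCK rmorphD /= cc rmorph1.
rewrite tc in h.
have E : 0 + t * p + - (p / (c + 1)) * p^* + - (p / (c + 1)) * t * c
   = - (p * p^*) * ((c + 2) / (c + 1) ^+ 2).
  by rewrite /t; field.
rewrite E in h.
have k0 : 0 < (c + 2) / (c + 1) ^+ 2.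
  by rewrite divr_gt0 ?exprn_gt0 // ltr_wpDl.
move: h; rewrite mulNr oppr_ge0 pmulr_lle0 // => h.
have : p * p^* = 0 by apply/eqP; rewrite eq_le h mul_conjC_ge0.
by move/eqP; rewrite mul_conjC_eq0 => /eqP.
Qed.
End Forms.
Lemma ker_sub (F : fieldType) n (A B : 'M[F]_n) :
  (forall c : 'cV_n, A *m c = 0 -> B *m c = 0) -> (B <= A)%MS.
Proof.
move=> H; rewrite submxE; apply/eqP/matrixP => i j.
have hc : A *m col j (cokermx A) = 0.
  apply/matrixP => k l; move: (mulmx_coker A) => /matrixP /(_ k j).
  by rewrite !mxE => h; rewrite -[X in _ = X]h; apply: eq_bigr => m _; rewrite !mxE.
move: (H _ hc) => /matrixP /(_ i 0); rewrite !mxE => h; rewrite -[X in _ = X]h.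
by apply: eq_bigr => m _; rewrite !mxE.
Qed.

Section Mx.
Variables (C : numClosedFieldType) (N : nat) (d : 'I_N -> nat).

Definition mxT (A : op C d) : 'M[C]_#|Idx d| :=
  \matrix_(i, j) A (enum_val j) (enum_val i).
Definition rv (v : vec C d) : 'rV[C]_#|Idx d| := \row_j v (enum_val j).

Lemma supp_to_mx A v : in_supp A v -> (rv v <= mxT A)%MS.
Proof.
case=> w hw; have -> : rv v = rv w *m mxT A.
  apply/rowP => k; rewrite !mxE hw -sum_enum; apply: eq_bigr => i _.
  by rewrite !mxE mulrC.
exact: submxMl.
Qed.

Lemma mx_to_supp A v : (rv v <= mxT A)%MS -> in_supp A v.
Proof.
case/submxP => D hD; exists (fun x => D 0 (enum_rank x)) => i.
move/matrixP: hD => /(_ 0 (enum_rank i)); rewrite !mxE enum_rankK => ->.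
rewrite -[RHS]sum_enum; apply: eq_bigr => k _; rewrite /mxT !mxE enum_rankK enum_valK.
by rewrite mulrC.
Qed.

Lemma ker_transfer (P S : op C d) :
  (forall u : vec C d, (forall j, \sum_i u i * P i j = 0) ->
     forall j, \sum_i u i * S i j = 0) ->
  forall c : 'cV_#|Idx d|, mxT P *m c = 0 -> mxT S *m c = 0.
Proof.
move=> H c hc.
have hu : forall j, \sum_i c (enum_rank i) 0 * P i j = 0.
  move=> j; move/matrixP: hc => /(_ (enum_rank j) 0).
  rewrite /mxT !mxE => h; rewrite -[RHS]h -sum_enum; apply: eq_bigr => k _.
  by rewrite !mxE enum_rankK enum_valK mulrC.
apply/matrixP => k l; rewrite [l]ord1 !mxE.
transitivity (\sum_i c (enum_rank i) 0 * S i (enum_val k)); last exact: H.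
rewrite -[RHS]sum_enum; apply: eq_bigr => m _; by rewrite /mxT !mxE enum_valK mulrC.
Qed.
End Mx.
Section Kern.
Variables (C : numClosedFieldType) (N : nat) (d : 'I_N -> nat).
Variables (K : {set 'I_N}) (e : Idx d).
Local Notation rK := (restr K).
Local Notation rKc := (restr (~: K)).
Local Notation glue := (glue K).

Definition normc (c : Idx d) := rK c == rK e.

Lemma pred_norm (a m : Idx d) : (normc m && (rKc a == rKc m)) = (m == glue e a).
Proof. by rewrite glue_char [rKc a == _]eq_sym. Qed.

Lemma sum_m (a b : Idx d) (X : C) :
  \sum_(m | normc m) (if rKc a == rKc m then if rKc b == rKc m then X else 0 else 0)
  = if rKc a == rKc b then X else 0.
Proof.
rewrite -big_mkcondr (big_pred1 (glue e a)); last by move=> m; rewrite pred_norm.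
by rewrite (eqP (glue_Kc _ _ _)) eq_sym.
Qed.

Lemma lhs_point (S : op C d) (z : vec C d) i j :
  (z i)^* * @tensorI C N d K (@ptrace C N d K S) i j * z j =
  \sum_a \sum_b (if rKc a == rKc b then (if rK i == rK a then
      (if j == glue b i then (z i)^* * S a b * z j else 0) else 0) else 0).
Proof.
rewrite /tensorI /ptrace.
case: ifP => hij.
  rewrite mulr_sumr mulr_suml; apply: eq_bigr => a _.
  rewrite mulr_sumr mulr_suml big_mkcond; apply: eq_bigr => b _.
  rewrite glue_char [rKc j == _]eq_sym hij andbT [rK i == _]eq_sym [rK j == _]eq_sym.
  by case: (rK a == rK i); case: (rK b == rK j); case: (rKc a == rKc b) => //=;
     rewrite ?mulr0 ?mul0r.
rewrite mulr0 mul0r big1 // => a _; rewrite big1 // => b _.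
by rewrite glue_char [rKc j == _]eq_sym hij andbF !if_same.
Qed.


Lemma sum_if1 (P : bool) (g : Idx d) (F : Idx d -> C) :
  \sum_j (if P then (if j == g then F j else 0) else 0) = if P then F g else 0.
Proof. by case: P; [rewrite -big_mkcond big_pred1_eq | rewrite big1]. Qed.

Lemma lhs_sum (S : op C d) (z : vec C d) :
  q (@tensorI C N d K (@ptrace C N d K S)) z z =
  \sum_a \sum_b (if rKc a == rKc b then
     \sum_(c | normc c) (z (glue a c))^* * S a b * z (glue b c) else 0).
Proof.
rewrite /q.
under eq_bigr => i _ do under eq_bigr => j _ do rewrite lhs_point.
under eq_bigr => i _ do rewrite exchange_big.
under eq_bigr => i _ do under eq_bigr => a _ do rewrite exchange_big.
rewrite exchange_big; under eq_bigr => a _ do rewrite exchange_big.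
apply: eq_bigr => a _; apply: eq_bigr => b _.
case: ifP => hab; last by rewrite big1 // => i _; rewrite big1.
under eq_bigr => i _ do rewrite sum_if1.
rewrite -big_mkcond /=.
rewrite (reindex_onto (glue a) (glue e)); last first.
  by move=> i /eqP hi; rewrite glue_glue_r glue_idK // hi.
apply: eq_big => [c|c _]; last by rewrite glue_glue_r.
by rewrite (eqP (glue_K _ _ _)) eqxx glue_glue_r /= eq_sym glue_char eqxx andbT.
Qed.

Definition wv (z : vec C d) (c m : Idx d) : vec C d :=
  fun a => if rKc a == rKc m then z (glue a c) else 0.

Lemma rhs_sum (S : op C d) (z : vec C d) :
  \sum_(c | normc c) \sum_(m | normc m) q S (wv z c m) (wv z c m) =
  \sum_a \sum_b (if rKc a == rKc b then
     \sum_(c | normc c) (z (glue a c))^* * S a b * z (glue b c) else 0).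
Proof.
rewrite /q /wv.
have pt : forall c m a b, (if rKc a == rKc m then z (glue a c) else 0)^* * S a b *
      (if rKc b == rKc m then z (glue b c) else 0) =
   if rKc a == rKc m then if rKc b == rKc m then (z (glue a c))^* * S a b * z (glue b c) else 0 else 0.
  move=> c m a b; case: (rKc a == rKc m); case: (rKc b == rKc m);
  by rewrite ?rmorph0 ?mulr0 ?mul0r.
under eq_bigr => c _ do under eq_bigr => m _ do under eq_bigr => a _ do under eq_bigr => b _ do rewrite pt.
under eq_bigr => c _ do rewrite exchange_big.
under eq_bigr => c _ do under eq_bigr => a _ do rewrite exchange_big.
under eq_bigr => c _ do under eq_bigr => a _ do under eq_bigr => b _ do rewrite sum_m.
rewrite exchange_big; under eq_bigr => a _ do rewrite exchange_big.
apply: eq_bigr => a _; apply: eq_bigr => b _.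
by case: ifP => //; rewrite big1.
Qed.
End Kern.

Lemma kernel (C : numClosedFieldType) (N : nat) (d : 'I_N -> nat) (K : {set 'I_N})
  (S : op C d) : psd S -> forall u : vec C d,
  (forall j, \sum_i u i * @tensorI C N d K (@ptrace C N d K S) i j = 0) ->
  forall j, \sum_i u i * S i j = 0.
Proof.
move=> hS u hu j0.
pose z : vec C d := fun i => (u i)^*.
have hq : q (@tensorI C N d K (@ptrace C N d K S)) z z = 0.
  rewrite /q. under eq_bigr => i _ do under eq_bigr => j _ do rewrite /z conjCK.
  by rewrite exchange_big big1 // => j _; rewrite -mulr_suml hu mul0r.
have hsum := rhs_sum K j0 S z; rewrite -(lhs_sum K j0 S z) hq in hsum.
have h0 : forall c m, normc K j0 c -> normc K j0 m -> q S (wv K z c m) (wv K z c m) = 0.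
  move=> c m hc hm.
  have hnn : forall c', normc K j0 c' -> 0 <= \sum_(m' | normc K j0 m') q S (wv K z c' m') (wv K z c' m').
    by move=> c' _; apply: sumr_ge0 => m' _; exact: hS.
  have := psumr_eq0P hnn hsum hc => hin.
  exact: (psumr_eq0P (fun m' _ => hS _) hin hm).
have hrow : forall c, normc K j0 c -> \sum_i (wv K z c c i)^* * S i j0 = 0.
  move=> c hc; have := psd_cs (fun k => if k == j0 then 1 else 0) hS (h0 c c hc hc).
  rewrite /q => h; rewrite -[RHS]h; apply: eq_bigr => i _.
  rewrite (bigD1 j0) //= eqxx mulr1 big1 ?addr0 // => k /negbTE ->; by rewrite mulr0.
have hu' : forall i, u i = \sum_(c | normc K j0 c) (wv K z c c i)^*.
  move=> i; rewrite /wv.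
  under eq_bigr => c _ do rewrite (fun_if (@Num.conj_op C)) rmorph0.
  rewrite -big_mkcondr (big_pred1 (glue K j0 i)); last by move=> m; rewrite pred_norm.
  by rewrite glue_glue_r glue_idK // /z conjCK.
under eq_bigr => i _ do rewrite hu' mulr_suml.
by rewrite exchange_big big1 // => c hc; exact: hrow.
Qed.

Theorem mainTheorem1 (C : numClosedFieldType) (N : nat) (d : 'I_N -> nat)
  (Ns : {set {set 'I_N}}) (rho : op C d) :
  neighborhood_structure Ns -> nontrivial Ns -> density rho ->
  forall sigma : op C d, joining Ns rho sigma ->
  forall v : vec C d, in_supp sigma v -> in_DQLS Ns rho v.
Proof.
move=> _ _ _ sigma [[hS _] hpt] v hv K HK.
apply: mx_to_supp; apply: submx_trans (supp_to_mx hv) _.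
apply: ker_sub. apply: ker_transfer => u hu j.
apply: (@kernel C N d K sigma hS) => j'; rewrite -[RHS](hu j'); apply: eq_bigr => i _.
by rewrite /tensorI; case: ifP => // _; rewrite (hpt K HK).
Qed.
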